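(* Let $G=(V,E)$ be a finite, simple, connected graph with $|V|\geq 3$, let $\mathcal{T}\subset V$ be a twin class of $G$ (of any size), and let $d\in\mathrm{Der}(\mathcal{A}(G))$ with $d(e_i)=\sum_{k\in V}d_{ik}e_k$. Then: (i) $d_{ik}=d_{ki}=0$ for all $i\in\mathcal{T}$ and $k\in V\setminus\mathcal{T}$; (ii) $d_{ii}=0$ for all $i\in\mathcal{T}$; (iii) $d_{\ell\ell}=0$ for all $\ell\in\mathcal{N}(\mathcal{T})$; (iv) $d_{ij}=-d_{ji}$ for all $i,j\in\mathcal{T}$ with $i\neq j$.
   Context: Throughout, $\mathbb{K}$ is a field of characteristic $0$. A graph $G=(V,E)$ has vertex set $V=\{1,\dots,n\}$ and is assumed finite, simple (no loops, no multiple edges) and connected. $\mathcal{N}(i)$ denotes the set of neighbors of vertex $i$, and for $U\subset V$, $\mathcal{N}(U)=\{j\in V: j\in\mathcal{N}(i)\text{ for some } i\in U\}$. $(a_{ij})$ is the adjacency matrix ($a_{ij}=1$ if $i,j$ are adjacent, $0$ otherwise). The evolution algebra $\mathcal{A}(G)$ is the $\mathbb{K}$-algebra with basis $\{e_i: i\in V\}$ and product $e_i\cdot e_i=\sum_{k\in V}a_{ik}e_k=\sum_{k\in\mathcal{N}(i)}e_k$ and $e_i\cdot e_j=0$ for $i\neq j$. A derivation of $\mathcal{A}(G)$ is a linear map $d:\mathcal{A}(G)\to\mathcal{A}(G)$ with $d(u\cdot v)=d(u)\cdot v+u\cdot d(v)$ for all $u,v$; $\mathrm{Der}(\mathcal{A}(G))$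 is the space of derivations, and for $d$ in it we write $d(e_i)=\sum_{k\in V}d_{ik}e_k$. Two vertices $i,j$ are twins if $\mathcal{N}(i)=\mathcal{N}(j)$; this is an equivalence relation whose classes are called twin classes. *)

(* Defs.v *)
From HB Require Import structures.
From mathcomp Require Import all_boot all_order all_algebra.
Set Implicit Arguments. Unset Strict Implicit. Unset Printing Implicit Defensive.
Import GRing.Theory.
Local Open Scope ring_scope.

Definition simple_graph (n : nat) (e : rel 'I_n) : Prop :=
  (forall i j, e i j = e j i) /\ (forall i, ~~ e i i).

Definition connected_graph (n : nat) (e : rel 'I_n) : Prop :=
  forall i j, connect e i j.

Definition nbhd (n : nat) (e : rel 'I_n) (i : 'I_n) : {set 'I_n} :=
  [set k | e i k].
Definition nbhdS (n : nat) (e : rel 'I_n) (U : {set 'I_n}) : {set 'I_n} :=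
  [set j | [exists i in U, e i j]].

Definition twins (n : nat) (e : rel 'I_n) (i j : 'I_n) : bool :=
  nbhd e i == nbhd e j.

Definition is_twin_class (n : nat) (e : rel 'I_n) (T : {set 'I_n}) : Prop :=
  exists i, T = [set j | twins e i j].

(* The evolution algebra A(G): underlying space K^n = 'rV[K]_n, with basis
   e_i = delta_mx 0 i, adjacency a_ik = (e i k)%:R, and product
   (u . v)_k = sum_i u_i v_i a_ik  (i.e. e_i.e_i = sum_k a_ik e_k, e_i.e_j = 0). *)
Definition evbasis (K : fieldType) (n : nat) (i : 'I_n) : 'rV[K]_n :=
  delta_mx 0 i.

Definition evmul (K : fieldType) (n : nat) (e : rel 'I_n) (u v : 'rV[K]_n)
  : 'rV[K]_n :=
  \row_k \sum_i u 0 i * v 0 i * (e i k)%:R.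

Definition is_derivation (K : fieldType) (n : nat) (e : rel 'I_n)
  (d : 'rV[K]_n -> 'rV[K]_n) : Prop :=
  (forall (a : K) (u v : 'rV[K]_n), d (a *: u + v) = a *: d u + d v) /\
  (forall u v, d (evmul e u v) = evmul e (d u) v + evmul e u (d v)).

Definition dcoef (K : fieldType) (n : nat) (d : 'rV[K]_n -> 'rV[K]_n)
  (i k : 'I_n) : K :=
  d (evbasis K i) 0 k.

(* Main.v *)
Require Import Defs.
From HB Require Import structures.
From mathcomp Require Import all_boot all_order all_algebra.
From mathcomp Require Import ring.
Import GRing.Theory.
Local Open Scope ring_scope.

Lemma nat_inj_c0 (K : fieldType) (c : nat) (x y : K) :
  [pchar K] =i pred0 -> (0 < c)%N -> x *+ c = y *+ c -> x = y.
Proof.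
move=> ch c0 /eqP; rewrite -subr_eq0 -mulrnBl -mulr_natr mulf_eq0.
have -> : (c%:R == 0 :> K) = false by rewrite (proj1 (pcharf0P K) ch); case: c c0.
by rewrite orbF subr_eq0 => /eqP.
Qed.

Lemma evmul_r (K : fieldType) n (e : rel 'I_n) (u : 'rV[K]_n) j m :
  evmul e u (evbasis K j) 0 m = u 0 j * (e j m)%:R.
Proof.
rewrite mxE (bigD1 j) //= [X in _ + X]big1 ?addr0.
  by rewrite /evbasis mxE !eqxx /= mulr1.
by move=> p /negbTE pj; rewrite /evbasis mxE eqxx pj /= mulr0 mul0r.
Qed.

Lemma evmul_l (K : fieldType) n (e : rel 'I_n) (u : 'rV[K]_n) j m :
  evmul e (evbasis K j) u 0 m = u 0 j * (e j m)%:R.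
Proof.
rewrite mxE (bigD1 j) //= [X in _ + X]big1 ?addr0.
  by rewrite /evbasis mxE !eqxx /= mul1r.
by move=> p /negbTE pj; rewrite /evbasis mxE eqxx pj /= mul0r mul0r.
Qed.

Lemma d_apply (K : fieldType) n (e : rel 'I_n) (d : 'rV[K]_n -> 'rV[K]_n) :
  is_derivation e d -> forall u m, d u 0 m = \sum_k u 0 k * dcoef d k m.
Proof.
case=> lin _ u m.
have dadd : forall u v, d (u + v) = d u + d v.
  by move=> x y; have := lin 1 x y; rewrite !scale1r.
have d0 : d 0 = 0.
  by apply: (addrI (d 0)); rewrite addr0 -dadd addr0.
have dsc : forall a u, d (a *: u) = a *: d u.
  by move=> a x; rewrite -[a *: x]addr0 lin d0 addr0.
rewrite {1}(row_sum_delta u) (big_morph d dadd d0) summxE.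
by apply: eq_bigr => k _; rewrite dsc mxE.
Qed.

Lemma d_key (K : fieldType) n (e : rel 'I_n) (d : 'rV[K]_n -> 'rV[K]_n) :
  is_derivation e d -> forall i j m,
  dcoef d i j * (e j m)%:R + dcoef d j i * (e i m)%:R =
  \sum_k (evbasis K j 0 i * (e i k)%:R) * dcoef d k m.
Proof.
move=> der i j m; have := (proj2 der) (evbasis K i) (evbasis K j).
move/(congr1 (fun M : 'rV[K]_n => M 0 m)); rewrite mxE evmul_r evmul_l (@d_apply K n e d der).
move=> <-; apply: eq_bigr => k _; by rewrite evmul_l.
Qed.

Lemma antisym_sum (K : fieldType) n (A : {set 'I_n}) (g : 'I_n -> 'I_n -> K) :
  [pchar K] =i pred0 ->
  (forall i k, i \in A -> k \in A -> i != k -> g k i = - g i k) ->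
  \sum_(i in A) \sum_(k in A) g k i = \sum_(i in A) g i i.
Proof.
move=> ch h.
have E : \sum_(i in A) \sum_(k in A) g k i = \sum_(i in A) \sum_(k in A) g i k.
  by rewrite exchange_big.
apply: (@nat_inj_c0 K 2) => //; rewrite !mulr2n.
rewrite {2}E -!big_split /=; apply: eq_bigr => i iA.
rewrite -big_split /= (bigD1 i) //= big1 ?addr0 //.
move=> k /andP [kA ki]; rewrite (h i k iA kA); first by rewrite addNr.
by rewrite eq_sym.
Qed.

Theorem lemma3p6 (K : fieldType) (n : nat) (e : rel 'I_n)
  (d : 'rV[K]_n -> 'rV[K]_n) (T : {set 'I_n}) :
  [pchar K] =i pred0 ->
  (3 <= n)%N ->
  simple_graph e ->
  connected_graph e ->
  is_twin_class e T ->
  is_derivation e d ->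
  [/\ (forall i k, i \in T -> k \notin T -> dcoef d i k = 0 /\ dcoef d k i = 0),
      (forall i, i \in T -> dcoef d i i = 0),
      (forall l, l \in nbhdS e T -> dcoef d l l = 0) &
      (forall i j, i \in T -> j \in T -> i != j -> dcoef d i j = - dcoef d j i)].
Proof.
move=> ch n3 [esym eirr] conn [i0 defT] der.
have inT : forall j, (j \in T) = (nbhd e i0 == nbhd e j) by move=> j; rewrite defT inE.
have twE : forall i j, i \in T -> j \in T -> forall m, e i m = e j m.
  move=> i j; rewrite !inT => /eqP h1 /eqP h2 m.
  have : (m \in nbhd e i) = (m \in nbhd e j) by rewrite -h1 -h2.
  by rewrite !inE.
have nT : forall i k, i \in T -> k \notin T -> [exists m, e i m != e k m].
  move=> i k iT kT; rewrite -negb_forall; apply: contra kT => /forallP h.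
  move: iT; rewrite !inT => /eqP ->; apply/eqP/setP => m; rewrite !inE; exact/eqP/h.
have ne : forall i, exists j, e i j.
  move=> i.
  have [j jn] : exists j : 'I_n, j != i.
    have h0 : (0 < n)%N by case: n n3 {inT twE nT conn esym eirr defT der d e T i0 i}.
    have h1 : (1 < n)%N by case: n n3 {inT twE nT conn esym eirr defT der d e T i0 i h0} => [|[|]].
    case: (eqVneq (val i) 0%N) => hi.
      by exists (Ordinal h1); apply/negP => /eqP h; move: hi; rewrite -h.
    by exists (Ordinal h0); apply/negP => /eqP h; move: hi; rewrite -h.
  case/connectP: (conn i j) => [[|x p]] /=.
    by move=> _ ji; rewrite ji eqxx in jn.
  by case/andP => eix _ _; exists x.
have i0T : i0 \in T by rewrite inT.
have NTE : forall l, (l \in nbhdS e T) = e i0 l.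
  move=> l; rewrite inE; apply/existsP/idP => [[j /andP [jT ejl]] | h].
    by rewrite (twE i0 j i0T jT).
  by exists i0; rewrite i0T h.
have H1 : forall i j m, i != j ->
    dcoef d i j * (e j m)%:R + dcoef d j i * (e i m)%:R = 0.
  move=> i j m ij; rewrite d_key // big1 // => k _.
  by rewrite /evbasis mxE eqxx /= (negbTE ij) !mul0r.
have H2 : forall i m, \sum_k (e i k)%:R * dcoef d k m =
    dcoef d i i * (e i m)%:R + dcoef d i i * (e i m)%:R.
  move=> i m; rewrite d_key //; apply: eq_bigr => k _.
  by rewrite /evbasis mxE !eqxx /= mul1r.
have P1 : forall i k, i \in T -> k \notin T -> dcoef d i k = 0 /\ dcoef d k i = 0.
  move=> i k iT kT.
  have ik : i != k by apply: contraNneq kT => <-.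
  have /existsP [m hm] := nT i k iT kT.
  have [m' eim'] := ne i; have [k' ekk'] := ne k.
  have A := H1 i k m ik; have B := H1 i k m' ik; have C := H1 i k k' ik.
  move: hm A; case: (e i m); case: (e k m) => //= _ A.
    move: A; rewrite mulr0n mulr1n mulr0 mulr1 add0r => dki.
    move: C; rewrite dki ekk' mul0r addr0 /= mulr1n mulr1 => dik; by [].
  move: A; rewrite mulr0n mulr1n mulr0 mulr1 addr0 => dik.
  move: B; rewrite dik eim' mul0r add0r /= mulr1n mulr1 => dki; by [].
have P4 : forall i j, i \in T -> j \in T -> i != j -> dcoef d i j = - dcoef d j i.
  move=> i j iT jT ij; have [m eim] := ne i.
  have := H1 i j m ij; rewrite -(twE i j iT jT m) eim /= mulr1n !mulr1 => /eqP.
  by rewrite addr_eq0 => /eqP.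
have [l0 el0] := ne i0.
have l0N : l0 \in nbhdS e T by rewrite NTE.
have SA : forall i m, i \in T -> e i0 m ->
    \sum_(k in nbhdS e T) dcoef d k m = dcoef d i i + dcoef d i i.
  move=> i m iT em; have := H2 i m; rewrite -(twE i0 i i0T iT m) em /= mulr1n !mulr1.
  move=> <-; rewrite big_mkcond; apply: eq_bigr => k _.
  rewrite NTE (twE i0 i i0T iT k); case: (e i k) => /=; by rewrite ?mulr1n ?mulr0n ?mul1r ?mul0r.
have SB : forall l i, e i0 l -> i \in T ->
    \sum_(k in T) dcoef d k i = dcoef d l l + dcoef d l l.
  move=> l i el iT; have := H2 l i.
  rewrite esym -(twE i0 i i0T iT l) el /= mulr1n !mulr1.
  move=> <-; rewrite big_mkcond; apply: eq_bigr => k _.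
  case: (boolP (k \in T)) => kT.
    by rewrite esym -(twE i0 k i0T kT l) el /= mulr1n mul1r.
  by rewrite (proj2 (P1 i k iT kT)) mulr0.
set del := dcoef d i0 i0; set eps := dcoef d l0 l0.
have dT : forall i, i \in T -> dcoef d i i = del.
  move=> i iT; apply: (@nat_inj_c0 K 2) => //; rewrite !mulr2n.
  by rewrite -(SA i l0 iT el0) (SA i0 l0 i0T el0).
have dN : forall l, e i0 l -> dcoef d l l = eps.
  move=> l el; apply: (@nat_inj_c0 K 2) => //; rewrite !mulr2n.
  by rewrite -(SB l i0 el i0T) (SB l0 i0 el0 i0T).
have cT : (0 < #|T|)%N by apply/card_gt0P; exists i0.
have cN : (0 < #|nbhdS e T|)%N by apply/card_gt0P; exists l0.
have E1 : eps + eps = del.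
  apply: (@nat_inj_c0 K _ _ _ ch cT).
  have AS := @antisym_sum K n T (fun k i => dcoef d k i) ch; rewrite /= in AS.
  rewrite -!sumr_const.
  have -> : \sum_(i in T) del = \sum_(i in T) dcoef d i i.
    by apply: eq_bigr => i iT; rewrite dT.
  rewrite -AS; last first.
    by move=> i k iT kT ik; rewrite (P4 k i kT iT) // eq_sym.
  by apply: eq_bigr => i iT; rewrite (SB l0 i el0 iT).
have E2 : del + del = eps.
  apply: (@nat_inj_c0 K _ _ _ ch cN).
  have AS := @antisym_sum K n (nbhdS e T) (fun k i => dcoef d k i) ch; rewrite /= in AS.
  rewrite -!sumr_const.
  have -> : \sum_(i in nbhdS e T) eps = \sum_(i in nbhdS e T) dcoef d i i.
    by apply: eq_bigr => i iN; rewrite dN // -NTE.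
  rewrite -AS.
    by apply: eq_bigr => m mN; rewrite (SA i0 m i0T) // -NTE.
  move=> l m lN mN lm; have := H1 l m i0 lm.
  rewrite (esym m i0) (esym l i0) -!NTE mN lN /= mulr1n !mulr1 => /eqP.
  by rewrite addrC addr_eq0 => /eqP.
have d0 : del = 0.
  rewrite -E2 in E1.
  have h3 : del *+ 3 = ((del+del)+(del+del)) - del by ring.
  rewrite E1 subrr in h3.
  by apply: (@nat_inj_c0 K 3) => //; rewrite h3 mul0rn.
split => //.
- by move=> i iT; rewrite dT.
- by move=> l; rewrite NTE => el; rewrite dN // -E2 d0 addr0.
Qed.
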